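(* Let $n\ge 2$, $A\in\mathbb{Z}^{d\times n}$, $\mathbf{b}\in\mathbb{Z}^d$, $\mathbf{c}\in\mathbb{Z}^n$, $\mathbf{u}\in\mathbb{Z}_{\ge0}^n$, and consider the ILP $\min\{\mathbf{c}^\top\mathbf{x} : A\mathbf{x}=\mathbf{b},\ \mathbf{0}\le\mathbf{x}\le\mathbf{u},\ \mathbf{x}\in\mathbb{Z}^n\}$. Let $\mathbf{x}_0$ be a feasible solution that is not optimal and let $\mathbf{x}_{\min}$ be an optimal solution. Then every sequence of discrete deepest-descent augmentations (with respect to the Graver basis $\mathcal{G}(A)$) starting at $\mathbf{x}_0$ reaches an optimal solution after at most $$\max\{1,\ (4n-4)\log_2\big(\mathbf{c}^\top(\mathbf{x}_0-\mathbf{x}_{\min})\big)\}$$ augmentations.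
   Context: Feasible solutions are the $\mathbf{x}\in\mathbb{Z}^n$ with $A\mathbf{x}=\mathbf{b}$, $\mathbf{0}\le\mathbf{x}\le\mathbf{u}$. For $\mathbf{v},\mathbf{w}\in\mathbb{R}^n$ write $\mathbf{v}\sqsubseteq\mathbf{w}$ if $v_iw_i\ge0$ and $|v_i|\le|w_i|$ for all $i$. The Graver basis $\mathcal{G}(A)$ is the (finite) set of $\sqsubseteq$-minimal elements of $(\ker(A)\cap\mathbb{Z}^n)\setminus\{\mathbf{0}\}$. Discrete deepest-descent augmentation: given a feasible $\mathbf{x}_k$, among all pairs $(\mathbf{z},\alpha)$ with $\mathbf{z}\in\mathcal{G}(A)$, $\alpha$ a positive integer and $\mathbf{x}_k+\alpha\mathbf{z}$ feasible, choose one maximizing $-\alpha\,\mathbf{c}^\top\mathbf{z}$; if this maximum is positive, set $\mathbf{x}_{k+1}:=\mathbf{x}_k+\alpha\mathbf{z}$, otherwise stop. *)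

(* Defs.v *)
From HB Require Import structures.
From mathcomp Require Import all_boot all_order all_algebra.
From Stdlib Require Reals.
Set Implicit Arguments. Unset Strict Implicit. Unset Printing Implicit Defensive.
Import Order.TTheory GRing.Theory Num.Theory.
Local Open Scope ring_scope.

Definition cost (n : nat) (c x : 'cV[int]_n) : int := \sum_(i < n) c i 0 * x i 0.

Definition feasible (d n : nat) (A : 'M[int]_(d, n)) (b : 'cV[int]_d)
  (u x : 'cV[int]_n) : Prop :=
  A *m x = b /\ (forall i, 0 <= x i 0 /\ x i 0 <= u i 0).

Definition optimal (d n : nat) (A : 'M[int]_(d, n)) (b : 'cV[int]_d)
  (c u x : 'cV[int]_n) : Prop :=
  feasible A b u x /\ (forall y, feasible A b u y -> cost c x <= cost c y).

Definition conformal (n : nat) (v w : 'cV[int]_n) : Prop :=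
  forall i, 0 <= v i 0 * w i 0 /\ `|v i 0| <= `|w i 0|.

Definition in_graver (d n : nat) (A : 'M[int]_(d, n)) (z : 'cV[int]_n) : Prop :=
  z <> 0 /\ A *m z = 0 /\
  (forall w : 'cV[int]_n, w <> 0 -> A *m w = 0 -> conformal w z -> w = z).

Definition dd_step (d n : nat) (A : 'M[int]_(d, n)) (b : 'cV[int]_d)
  (c u x y : 'cV[int]_n) : Prop :=
  exists (z : 'cV[int]_n) (alpha : nat),
    [/\ in_graver A z, (0 < alpha)%N, y = x + (alpha%:R : int) *: z
      & feasible A b u y] /\
        (forall (z' : 'cV[int]_n) (alpha' : nat), in_graver A z' -> (0 < alpha')%N ->
           feasible A b u (x + (alpha'%:R : int) *: z') ->
           - ((alpha'%:R : int) * cost c z') <= - ((alpha%:R : int) * cost c z)) /\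
    0 < - ((alpha%:R : int) * cost c z).

Definition dd_stops (d n : nat) (A : 'M[int]_(d, n)) (b : 'cV[int]_d)
  (c u x : 'cV[int]_n) : Prop :=
  forall (z : 'cV[int]_n) (alpha : nat), in_graver A z -> (0 < alpha)%N ->
    feasible A b u (x + (alpha%:R : int) *: z) ->
    - ((alpha%:R : int) * cost c z) <= 0.

Definition int_to_Z (z : int) : BinNums.Z :=
  match z with
  | Posz m => BinInt.Z.of_nat m
  | Negz m => BinInt.Z.opp (BinInt.Z.of_nat m.+1)
  end.

Definition within_bound (k n : nat) (D : int) : Prop :=
  Rdefinitions.Rle (Raxioms.INR k)
    (Rbasic_fun.Rmax (Raxioms.INR 1)
       (Rdefinitions.Rmult (Raxioms.INR (4 * n - 4))
          (Rdefinitions.Rdiv (Rpower.ln (Rdefinitions.IZR (int_to_Z D)))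
                             (Rpower.ln (Raxioms.INR 2))))).

(* Main.v *)
Require Import Defs.
From HB Require Import structures.
From mathcomp Require Import all_boot all_order all_algebra.
From Stdlib Require Import Classical.
From Stdlib Require Reals.

Module RealPart.
From Stdlib Require Import Reals Lra.
From mathcomp Require Import all_boot.
From mathcomp Require Import zify.
Local Open Scope R_scope.
Lemma expn_pow m n : expn m n = Nat.pow m n.
Proof. elim: n => [|n IH] //=; by rewrite expnS IH. Qed.

Lemma ln_le_x y : 0 < y -> ln y <= y - 1.
Proof. move=> hy; have := exp_ineq1_le (ln y); rewrite exp_ln //; lra. Qed.

Lemma ln_mono x y : 0 < x -> x <= y -> ln x <= ln y.
Proof.
move=> hx [h|->]; last lra.
by apply: Rlt_le; apply: ln_increasing.
Qed.

Lemma ln2_bounds : 0 < ln 2 <= 3/4.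
Proof.
split.
  rewrite -ln_1; apply: ln_increasing; lra.
have h : 2 <= exp (3/4).
  have e : 3/4 = 3/20 + (3/20 + (3/20 + (3/20 + 3/20))) by lra.
  rewrite e !exp_plus.
  have h1 := exp_ineq1_le (3/20).
  have h0 : 0 <= 1 + 3/20 by lra.
  set t := exp (3/20) in h1 *.
  have ht : 1.15 <= t by lra.
  have : 1.15 * (1.15 * (1.15 * (1.15 * 1.15))) <= t * (t * (t * (t * t))).
    repeat (apply: Rmult_le_compat; try lra; try (repeat apply: Rmult_le_pos; lra)).
  lra.
have := @ln_mono 2 _ ltac:(lra) h; rewrite ln_exp; lra.
Qed.

Lemma real_bound (n m Dn : nat) : (2 <= n)%N -> (1 <= m)%N -> (2 <= Dn)%N ->
  ((2*n)^m <= (2*n-1)^m * Dn)%N ->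
  INR (m.+1) <= INR (4*n-4) * (ln (INR Dn) / ln (INR 2)).
Proof.
move=> hn hm hD hp.
have hN : 2 <= INR n by apply: (le_INR 2); apply/leP.
have hDr : 2 <= INR Dn by apply: (le_INR 2); apply/leP.
have e4 : INR (4*n-4) = 4 * INR n - 4.
  rewrite subnE minus_INR; last by apply/leP; lia.
  rewrite mulnE mult_INR /=; lra.
have e2 : INR (2*n-1) = 2 * INR n - 1.
  rewrite subnE minus_INR; last by apply/leP; lia.
  by rewrite mulnE mult_INR.
have H : (2 * INR n) ^ m <= (2 * INR n - 1) ^ m * INR Dn.
  have := le_INR _ _ (elimT leP hp).
  rewrite mulnE !mult_INR !expn_pow !pow_INR e2 -?mulnE mult_INR /=; by rewrite (_ : 1 + 1 = 2); [|lra].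
set N := INR n in hN e4 e2 H *.
have hl := @ln_mono ((2*N)^m) _ ltac:(apply: pow_lt; lra) H.
rewrite ln_mult in hl; [|apply: pow_lt; lra|lra].
rewrite !ln_pow in hl; try lra.
set y := ln (INR Dn) in hl *.
have hq : ln (2 * N - 1) <= ln (2 * N) - 1 / (2 * N).
  have e : 2 * N - 1 = (2 * N) * ((2 * N - 1) / (2 * N)) by field; lra.
  rewrite {1}e ln_mult; [|lra|apply: Rdiv_lt_0_compat; lra].
  have := ln_le_x ((2 * N - 1) / (2 * N)) ltac:(apply: Rdiv_lt_0_compat; lra).
  have e' : (2 * N - 1) / (2 * N) - 1 = - (1 / (2 * N)) by field; lra.
  lra.
have hm1 : 1 <= INR m by apply: (le_INR 1); apply/leP.
have hmy : INR m <= 2 * N * y.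
  have h1 : INR m * (1 / (2 * N)) <= y.
    have := Rmult_le_compat_l (INR m) _ _ ltac:(lra) hq; lra.
  have e : INR m = (INR m * (1 / (2 * N))) * (2 * N) by field; lra.
  rewrite e Rmult_comm; apply: Rmult_le_compat_l; lra.
have [hL0 hL1] := ln2_bounds.
have hLy : ln 2 <= y by apply: ln_mono; lra.
rewrite S_INR e4 (_ : INR 2 = 2) //.
set L := ln 2 in hL0 hL1 hLy *.
have e : (4 * N - 4) * (y / L) = ((4 * N - 4) * y) / L by field; lra.
rewrite e; apply: (Rmult_le_reg_r L); first lra.
have -> : (4 * N - 4) * y / L * L = (4 * N - 4) * y by field; lra.
have h1 : (INR m + 1) * L <= 2 * N * y * L + L by nra.
have h2 : 2 * N * y * L <= 2 * N * y * (3/4) by apply: Rmult_le_compat_l; nra.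
nra.
Qed.

End RealPart.

From mathcomp Require Import zify ring lra.
Set Implicit Arguments. Unset Strict Implicit. Unset Printing Implicit Defensive.
Import Order.TTheory GRing.Theory Num.Theory.
Local Open Scope ring_scope.

Lemma confE (a b : int) : (0 <= a*b /\ `|a| <= `|b|) <-> ((0 <= a <= b) \/ (b <= a <= 0)).
Proof. split. move=> [h1 h2]. nia. move=> [/andP[h1 h2]|/andP[h1 h2]]; split; nia. Qed.

Definition c1 (a b : int) := (0 <= a <= b) \/ (b <= a <= 0).

Lemma conformalP n (v w : 'cV[int]_n) : conformal v w <-> forall i, c1 (v i 0) (w i 0).
Proof.
split=> h i; first by apply/confE; exact: h.
by apply/confE; exact: h.
Qed.

Lemma conf_trans n (u v w : 'cV[int]_n) : conformal u v -> conformal v w -> conformal u w.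
Proof.
move=> /conformalP h1 /conformalP h2; apply/conformalP=> i.
move: (h1 i) (h2 i); rewrite /c1; lia.
Qed.

Definition N n (v : 'cV[int]_n) : nat := (\sum_i absz (v i 0%R))%N.

Lemma N_lt n (w v : 'cV[int]_n) : conformal w v -> w <> v -> (N w < N v)%N.
Proof.
move=> /conformalP h hne.
have [i hi] : exists i, (absz (w i 0%R) < absz (v i 0%R))%N.
  apply: NNPP => hn; apply: hne; apply/matrixP=> p q.
  rewrite (ord1 q). have := h p. rewrite /c1 => hp.
  have : ~ (absz (w p 0%R) < absz (v p 0%R))%N by move=> H; apply: hn; exists p.
  lia.
rewrite /N (bigD1 i) //= [X in (_ < X)%N](bigD1 i) //=.
rewrite -addSn leq_add //. apply: leq_sum => j _. have := h j; rewrite /c1. lia.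
Qed.

Lemma N_sub n (g v : 'cV[int]_n) : conformal g v -> N (v - g) = (N v - N g)%N.
Proof.
move=> /conformalP h.
have e : N v = (N (v - g) + N g)%N.
  rewrite /N -big_split /=; apply: eq_bigr => i _.
  have := h i; rewrite /c1 !mxE; move: (v i 0) (g i 0) => a b; lia.
lia.
Qed.

Lemma N_eq0 n (v : 'cV[int]_n) : N v = 0%N -> v = 0.
Proof.
move=> /eqP; rewrite /N sum_nat_eq0 => /forallP h.
apply/matrixP=> i j; rewrite (ord1 j) mxE.
have := h i. rewrite /=. move: (v i 0) => a. lia.
Qed.

Lemma conf_sub n (g v : 'cV[int]_n) : conformal g v -> conformal (v - g) v.
Proof.
move=> /conformalP h; apply/conformalP=> i; have := h i; rewrite /c1 !mxE.
move: (v i 0) (g i 0) => a b; lia.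
Qed.

Section Dec.
Variables (d n : nat) (A : 'M[int]_(d, n)).

Lemma graver_below k : forall w v : 'cV[int]_n, (N w <= k)%N -> w <> 0 -> A *m w = 0 ->
  conformal w v -> exists g, in_graver A g /\ conformal g v.
Proof.
elim: k => [|k IH] w v hk hw hA hc.
  by exfalso; apply: hw; apply: N_eq0; lia.
case: (classic (in_graver A w)) => hg; first by exists w.
have : ~ (forall w' : 'cV[int]_n, w' <> 0 -> A *m w' = 0 -> conformal w' w -> w' = w).
  by move=> H; apply: hg; split=> //; split.
move=> /not_all_ex_not [w' hw'].
have [h1 hw1] := imply_to_and _ _ hw'.
have [h2 hw2] := imply_to_and _ _ hw1.
have [h3 h4] := imply_to_and _ _ hw2.
apply: (IH w' v _ h1 h2 (conf_trans h3 hc)).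
have := N_lt h3 h4; lia.
Qed.

Lemma conf_refl (v : 'cV[int]_n) : conformal v v.
Proof. by apply/conformalP=> i; rewrite /c1; move: (v i 0) => a; lia. Qed.

Lemma decomp k : forall v : 'cV[int]_n, (N v <= k)%N -> A *m v = 0 ->
  exists s : seq 'cV[int]_n, (forall g, g \in s -> in_graver A g /\ conformal g v)
    /\ v = \sum_(g <- s) g.
Proof.
elim: k => [|k IH] v hk hA.
  exists [::]; split=> //; rewrite big_nil; apply: N_eq0; lia.
have [->|hv] := eqVneq v 0; first by exists [::]; rewrite big_nil.
have [g [hg hgv]] := graver_below (leqnn (N v)) (elimN eqP hv) hA (conf_refl v).
have hNg : (0 < N g)%N.
  case: hg => hg0 _; rewrite lt0n; apply/negP => /eqP /N_eq0; exact: hg0.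
have hA' : A *m (v - g) = 0 by rewrite mulmxBr hA (proj1 (proj2 hg)) subr0.
have hN' : (N (v - g) <= k)%N by rewrite N_sub //; have := N_lt hgv; lia.
have [s' [hs1 hs2]] := IH _ hN' hA'.
exists (g :: s'); split.
  move=> g'; rewrite inE => /orP [/eqP ->|hg']; first by [].
  have [h1 h2] := hs1 _ hg'; split=> //; exact: conf_trans h2 (conf_sub hgv).
by rewrite big_cons -hs2 addrC subrK.
Qed.
End Dec.

Section Cara.
Variables (n m : nat) (H : 'I_m -> 'cV[rat]_n).

Lemma dep (S : {set 'I_m}) : (n < #|S|)%N -> exists w : 'I_m -> rat,
  (forall i, i \notin S -> w i = 0) /\ (exists i, w i != 0) /\ \sum_i w i *: H i = 0.
Proof.
move=> hS.
have /card_gt0P [x0 hx0] : (0 < #|S|)%N by lia.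
pose M : 'M[rat]_(#|S|, n) := \matrix_(k, j) H (enum_val k) j 0.
have hnf : ~~ row_free M.
  rewrite -row_leq_rank; apply/negP => h; have := rank_leq_col M; lia.
have hK : kermx M != 0 by rewrite kermx_eq0.
have [k hk] : exists k, row k (kermx M) != 0.
  apply: NNPP => hn; move/negP: hK; apply; apply/eqP/row_matrixP => k.
  rewrite row0; apply/eqP; apply: NNPP => h; apply: hn; exists k; apply/negP; exact: h.
set r := row k (kermx M).
have hr : r *m M = 0 by rewrite /r -row_mul mulmx_ker row0.
have [j hj] : exists j, r 0 j != 0.
  apply: NNPP => hn; move/negP: hk; apply; apply/eqP/matrixP => a b.
  rewrite (ord1 a) /r mxE [RHS]mxE; apply/eqP; apply: NNPP => h; apply: hn; exists b; rewrite mxE; apply/negP; exact: h.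
exists (fun i => if i \in S then r 0 (enum_rank_in hx0 i) else 0); split.
  by move=> i /negbTE ->.
split.
  exists (enum_val j); rewrite enum_valP (enum_valK_in hx0); exact: hj.
rewrite (bigID (fun i => i \in S)) /= [X in _ + X]big1 ?addr0; last first.
  by move=> i /negbTE ->; rewrite scale0r.
rewrite (eq_bigr (fun i => r 0 (enum_rank_in hx0 i) *: H i)); last by move=> i ->.
rewrite big_enum_val /=.
apply/matrixP => a b; rewrite (ord1 b) summxE mxE.
have E := congr1 (fun X : 'M[rat]_(1, n) => X 0 a) hr; rewrite !mxE in E.
apply: (etrans _ E); apply: eq_bigr => q _.
by rewrite !mxE (enum_valK_in hx0).
Qed.

Lemma cara k : forall l : 'I_m -> rat, (forall i, 0 <= l i) ->
  (#|[set i | l i != 0%R]| <= k)%N ->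
  exists l' : 'I_m -> rat, (forall i, 0 <= l' i) /\
    (#|[set i | l' i != 0%R]| <= n)%N /\ \sum_i l' i *: H i = \sum_i l i *: H i.
Proof.
elim: k => [|k IH] l hl hk.
  by exists l; split=> //; split=> //; lia.
have [hle|hgt] := leqP #|[set i | l i != 0%R]| n; first by exists l.
set S := [set i | l i != 0] in hgt.
have [w [hw1 [[i0 hi0] hw3]]] :
    exists w : 'I_m -> rat, (forall i, i \notin S -> w i = 0) /\ (exists i, 0 < w i)
      /\ \sum_i w i *: H i = 0.
  have [w [hw1 [[i0 hi0] hw3]]] := dep hgt.
  have [hp|hn] := ltP 0 (w i0).
    by exists w; split=> //; split=> //; exists i0.
  exists (fun i => - w i); split; first by move=> i /hw1 ->; rewrite oppr0.
  split; first by exists i0; rewrite oppr_gt0 lt_neqAle hi0 hn.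
  by rewrite (eq_bigr (fun i => - (w i *: H i))) ?sumrN ?hw3 ?oppr0 // => i _; rewrite scaleNr.
case: (@arg_minP _ _ _ i0 (fun i => 0 < w i) (fun i => l i / w i) hi0) => i1 hi1 hmin.
set t := l i1 / w i1.
have ht0 : 0 <= t by rewrite /t divr_ge0 // ltW.
pose l' i := l i - t * w i.
have hl' : forall i, 0 <= l' i.
  move=> i; rewrite /l' subr_ge0.
  have [hp|hn] := ltP 0 (w i).
    have := hmin i hp; rewrite -/t => h.
    by rewrite -(divfK (lt0r_neq0 hp) (l i)) ler_wpM2r // ltW.
  apply: le_trans (hl i); rewrite mulr_ge0_le0 //.
have hsub : [set i | l' i != 0] \proper S.
  apply/properP; split.
    apply/subsetP => i; rewrite !inE; apply: contraNneq => hli.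
    have : i \notin S by rewrite inE hli eqxx.
    by move/hw1 => h; rewrite /l' hli h mulr0 subr0.
  exists i1.
    rewrite inE; apply/negP => /eqP h0.
    have : i1 \notin S by rewrite inE h0 eqxx.
    by move/hw1 => h; move: hi1; rewrite h ltxx.
  by rewrite inE /l' /t divfK ?subrr ?eqxx // lt0r_neq0.
have hc := proper_card hsub.
have hk' : (#|[set i | l' i != 0%R]| <= k)%N by move: hc hk; rewrite /S; lia.
have [l'' [h1 [h2 h3]]] := IH l' hl' hk'.
exists l''; split=> //; split=> //; rewrite h3.
rewrite /l' (eq_bigr (fun i => l i *: H i - t *: (w i *: H i))); last first.
  by move=> i _; rewrite scalerBl scalerA.
by rewrite sumrB -scaler_sumr hw3 scaler0 subr0.
Qed.
End Cara.

Lemma scal_c1 (a vv : int) (al : nat) (l : rat) : c1 a vv -> al%:R <= l ->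
  (0 <= l * a%:~R <= vv%:~R) \/ (vv%:~R <= l * a%:~R <= (0:rat)) -> c1 (al%:R * a) vv.
Proof.
rewrite /c1 => h1 h2 h4.
have h0 : (0 : rat) <= al%:R by rewrite ler0n.
have h1' : (0 <= (a%:~R : rat) <= vv%:~R) \/ (vv%:~R <= (a%:~R : rat) <= 0).
  by case: h1 => /andP[p q]; [left|right]; rewrite ?ler0z ?lerz0 ?ler_int p q.
have E : ((al%:R * a)%:~R : rat) = al%:R * a%:~R by rewrite intrM rmorph_nat.
suff : (0 <= ((al%:R * a)%:~R : rat) <= vv%:~R) \/ (vv%:~R <= ((al%:R * a)%:~R : rat) <= 0).
  by case=> /andP[p q]; rewrite ?ler0z ?lerz0 ?ler_int in p q; [left|right]; rewrite p q.
move: h1'.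
rewrite E; move: (a%:~R : rat) (vv%:~R : rat) h4 => A V h4 h1'.
case: h1' => /andP[p1 p2]; case: h4 => /andP[q1 q2]; [left|left|right|right]; apply/andP; split; nra.
Qed.

Section Gain.
Variables (d n : nat) (A : 'M[int]_(d, n)) (b : 'cV[int]_d) (c u : 'cV[int]_n).

Lemma cost_lin (x y : 'cV[int]_n) : cost c (y - x) = cost c y - cost c x.
Proof. by rewrite /cost -sumrB; apply: eq_bigr => i _; rewrite !mxE mulrBr. Qed.

Lemma feas_step (x y w : 'cV[int]_n) : feasible A b u x -> feasible A b u y ->
  conformal w (y - x) -> A *m w = 0 -> feasible A b u (x + w).
Proof.
move=> [hAx hx] [hAy hy] /conformalP hw hA; split; first by rewrite mulmxDr hAx hA addr0.
move=> i; have := hw i; have := hx i; have := hy i; rewrite /c1 !mxE.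
move: (x i 0) (y i 0) (w i 0) (u i 0) => p q r s; lia.
Qed.


Lemma gain (hn : (0 < n)%N) (x y : 'cV[int]_n) : feasible A b u x -> feasible A b u y ->
  cost c y < cost c x ->
  exists (g : 'cV[int]_n) (al : nat), [/\ in_graver A g, (0 < al)%N,
    feasible A b u (x + (al%:R : int) *: g) &
    cost c x - cost c y <= (2 * n)%:R * ((al%:R : int) * - cost c g)].
Proof.
move=> hx hy hlt.
set v := y - x.
have hAv : A *m v = 0 by rewrite mulmxBr (proj1 hx) (proj1 hy) subrr.
have [s [hs hsum]] := decomp (leqnn (N v)) hAv.
set m := size s.
pose h (i : 'I_m) := nth 0 s i.
have hh : forall i, in_graver A (h i) /\ conformal (h i) v.
  by move=> i; apply: hs; apply: mem_nth.
have hv : v = \sum_(i < m) h i by rewrite hsum (big_nth 0) big_mkord.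
pose hq i : 'cV[rat]_n := map_mx (fun z : int => z%:~R) (h i).
have [l [hl0 [hlc hls]]] := @cara n m hq #|[set i : 'I_m | (1:rat) != 0%R]| (fun _ => 1)
   (fun _ => ler01) (leqnn _).
have Ep : forall p, \sum_i l i * (h i p 0)%:~R = ((v p 0)%:~R : rat).
  move=> p; have := congr1 (fun X : 'cV[rat]_n => X p 0) hls; rewrite !summxE /hq.
  under eq_bigr => i _ do rewrite !mxE.
  move=> E; rewrite E; clear E; rewrite hv summxE rmorph_sum; apply: eq_bigr => i _.
  by rewrite !mxE mul1r.
pose gam i : int := - cost c (h i).
have EG : \sum_i l i * (gam i)%:~R = ((cost c x - cost c y)%:~R : rat).
  have -> : \sum_i l i * (gam i)%:~R =
      - \sum_p (c p 0)%:~R * \sum_i l i * (h i p 0)%:~R.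
    rewrite /gam /cost.
    under eq_bigr => i _ do rewrite intrN rmorph_sum mulrN mulr_sumr.
    rewrite sumrN; congr (- _); rewrite exchange_big /=; apply: eq_bigr => p _.
    rewrite mulr_sumr; apply: eq_bigr => i _; rewrite intrM; ring.
  under eq_bigr => p _ do rewrite Ep.
  rewrite -opprB -cost_lin -/v intrN /cost rmorph_sum; congr (- _).
  by apply: eq_bigr => p _; rewrite rmorphM.
set S := [set i | l i != 0%R] in hlc.
set Gq : rat := (cost c x - cost c y)%:~R in EG.
have hG : 0 < Gq by rewrite /Gq ltr0z subr_gt0.
pose F i := l i * (gam i)%:~R.
have hF0 : forall i, i \notin S -> F i = 0.
  by move=> i; rewrite /F inE negbK => /eqP ->; rewrite mul0r.
have [i0 hi0] : exists i0, i0 \in S.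
  apply: NNPP => hne; have : Gq = 0.
    rewrite -EG big1 // => i _; apply: hF0; apply/negP => hi; apply: hne; by exists i.
  by move=> e; move: hG; rewrite e ltxx.
case: (@arg_maxP _ _ _ i0 (fun i => i \in S) F hi0) => i1 hi1 hmax.
have hb : Gq <= n%:R * F i1.
  have e1 : Gq = \sum_(i in S) F i.
    rewrite -EG (bigID (fun i => i \in S)) /= [X in _ + X]big1 ?addr0 //.
  have e2 : \sum_(i in S) F i <= \sum_(i in S) F i1 by apply: ler_sum => i hi; apply: hmax.
  rewrite sumr_const -mulr_natl in e2.
  have hS : (#|S|%:R : rat) <= n%:R by rewrite ler_nat.
  have hS0 : (0 : rat) <= #|S|%:R by rewrite ler0n.
  move: e1 e2 hS hS0 hG; move: (F i1) (#|S|%:R : rat) (n%:R : rat) => f a nn.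
  move=> -> e2 hS hS0 hG; have [hf|hf] := lerP 0 f; nra.
have hn0 : (0 : rat) <= n%:R by rewrite ler0n.
have hF1 : 0 < F i1 by nra.
have hl1 := hl0 i1.
have hgam : (0 : rat) < (gam i1)%:~R by move: hF1; rewrite /F; nra.
have Cp : forall p, (0 <= l i1 * (h i1 p 0)%:~R <= (v p 0)%:~R) \/
                    ((v p 0)%:~R <= l i1 * (h i1 p 0)%:~R <= (0:rat)).
  move=> p.
  have hc : forall k, c1 (h k p 0) (v p 0) by move=> k; have /conformalP := (hh k).2; apply.
  have [hv0|hv0] := lerP 0 (v p 0).
    left; have hk : forall k, (0 : rat) <= l k * (h k p 0)%:~R.
      move=> k; apply: mulr_ge0 => //; rewrite ler0z; have := hc k; rewrite /c1.
      by move: (h k p 0) (v p 0) hv0 => q w; lia.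
    rewrite hk /= -Ep (bigD1 i1) //= lerDl; exact: sumr_ge0.
  right; have hk : forall k, l k * (h k p 0)%:~R <= (0 : rat).
    move=> k; apply: mulr_ge0_le0 => //; rewrite lerz0; have := hc k; rewrite /c1.
    by move: (h k p 0) (v p 0) hv0 => q w; lia.
  rewrite hk andbT -Ep (bigD1 i1) //= gerDl; exact: sumr_le0.
suff [al [hal0 hconf hl2]] : exists al : nat, [/\ (0 < al)%N,
    conformal ((al%:R : int) *: h i1) v & l i1 <= 2 * al%:R].
  exists (h i1), al; split => //; first exact: (hh i1).1.
    apply: feas_step hx hy hconf _.
    by rewrite -scalemxAr (proj1 (proj2 (hh i1).1)) scaler0.
  rewrite -(ler_int rat) -/Gq !intrM !rmorph_nat natrM -/(gam i1).
  have ha : (0 : rat) <= al%:R by rewrite ler0n.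
  move: hb hl2 hgam hl1 hn0 ha; rewrite /F.
  move: (l i1) ((gam i1)%:~R : rat) (n%:R : rat) (al%:R : rat) => L g nn a.
  move=> hb hl2 hgam hl1 hn0 ha.
  have h1 : L * g <= 2 * a * g by nra.
  have h2 : nn * (L * g) <= nn * (2 * a * g) by apply: ler_wpM2l.
  lra.
have [hl1'|hl1'] := lerP 1 (l i1).
  exists (Num.Def.trunc (l i1)); split.
  - by rewrite truncn_gt0.
  - apply/conformalP => p; rewrite mxE; apply: (scal_c1 (l := l i1)); first by have /conformalP := (hh i1).2; apply.
      by rewrite truncn_le.
    exact: Cp.
  - have h1 := truncnS_gt (l i1); have h2 : (1 <= Num.Def.trunc (l i1))%N by rewrite truncn_gt0.
    rewrite -natr1 in h1; have h3 : (1 : rat) <= (Num.Def.trunc (l i1))%:R by rewrite ler1n.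
    move: h1 h3; move: (Num.Def.trunc (l i1))%:R => a; lra.
exists 1%N; split => //.
  by rewrite scale1r; exact: (hh i1).2.
lra.
Qed.
End Gain.

Lemma bern (a k : nat) : (1 <= a)%N -> (a ^ k * (a + k) <= (a.+1) ^ k * a)%N.
Proof.
move=> ha; elim: k => [|k IH]; first by rewrite !expn0 !mul1n addn0.
rewrite !expnS.
move: IH; move: (a ^ k)%N ((a.+1) ^ k)%N => P Q IH. nia.
Qed.

Unset Implicit Arguments.
Theorem lemma1 (d n : nat) (hn : (2 <= n)%N) (A : 'M[int]_(d, n))
  (b : 'cV[int]_d) (c u : 'cV[int]_n) (hu : forall i, 0 <= u i 0)
  (x0 xmin : 'cV[int]_n)
  (hx0 : feasible A b u x0) (hx0n : ~ optimal A b c u x0)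
  (hxmin : optimal A b c u xmin)
  (x : nat -> 'cV[int]_n) (hstart : x 0%N = x0)
  (hseq : forall k : nat, ~ dd_stops A b c u (x k) -> dd_step A b c u (x k) (x k.+1)) :
  exists k : nat, within_bound k n (cost c (x0 - xmin)) /\ optimal A b c u (x k).
Proof.
have hn1 : (0 < n)%N by lia.
set cm := cost c xmin.
have hopt : forall z, feasible A b u z -> cm <= cost c z := hxmin.2.
have cost_step : forall (z : 'cV[int]_n) (a : int) w, cost c (z + a *: w) = cost c z + a * cost c w.
  move=> z a w; rewrite /cost mulr_sumr -big_split. apply: eq_bigr => i _ /=; rewrite !mxE; ring.
have nopt : forall z, feasible A b u z -> ~ optimal A b c u z -> cm < cost c z.
  move=> z hz hno; rewrite ltNge; apply/negP => hle; apply: hno; split => // w hw.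
  exact: le_trans hle (hopt w hw).
set K : int := (2 * n)%:R.
have hK1 : 1 <= K by rewrite /K ler1n; lia.
have key : forall z, feasible A b u z -> ~ optimal A b c u z ->
   exists (g : 'cV[int]_n) (al : nat), [/\ in_graver A g, (0 < al)%N,
     feasible A b u (z + (al%:R : int) *: g) &
     cost c z - cm <= K * ((al%:R : int) * - cost c g)].
  move=> z hz hno; apply: gain => //; [exact: hxmin.1 | exact: nopt].
have notstop : forall z, feasible A b u z -> ~ optimal A b c u z -> ~ dd_stops A b c u z.
  move=> z hz hno hst; have [g [al [hg hal hf hgain]]] := key z hz hno.
  have := hst g al hg hal hf; have := nopt z hz hno; move: hgain hK1.
  rewrite mulrN; nia.
have step : forall z z', feasible A b u z -> ~ optimal A b c u z -> dd_step A b c u z z' ->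
    feasible A b u z' /\ K * (cost c z' - cm) <= (K - 1) * (cost c z - cm).
  move=> z z' hz hno [zz [al [[hg hal -> hf'] [hmax hpos]]]]; split => //.
  have [g [al' [hg' hal' hf hgain]]] := key z hz hno.
  have := hmax g al' hg' hal' hf; rewrite cost_step; move: hgain hK1.
  rewrite mulrN; nia.
set D := cost c x0 - cm.
have inv : forall k, (exists j, (j <= k)%N /\ optimal A b c u (x j)) \/
   (feasible A b u (x k) /\ K ^+ k * (cost c (x k) - cm) <= (K - 1) ^+ k * D).
  elim => [|k IH]; first by right; rewrite hstart !expr0 !mul1r.
  case: IH => [[j [hj hoj]]|[hf hb]]; first by left; exists j; split => //; lia.
  case: (classic (optimal A b c u (x k))) => ho; first by left; exists k; split.
  have [hf' hb'] := step _ _ hf ho (hseq k (notstop _ hf ho)).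
  right; split => //; rewrite !exprS.
  have hP : 0 <= K ^+ k by apply: exprn_ge0; lia.
  have hK0 : 0 <= K - 1 by lia.
  have e1 := ler_wpM2l hP hb'.
  have e2 := ler_wpM2l hK0 hb.
  move: e1 e2; move: (K ^+ k) ((K - 1) ^+ k) => P Q e1 e2.
  rewrite mulrA in e1; rewrite !mulrA in e2. lra.
have hD1 : 1 <= D by rewrite /D; have := nopt _ hx0 hx0n; lia.
have [Dn eD] : exists Dn : nat, D = Dn%:Z by exists `|D|%N; rewrite abszE ger0_norm //; lia.
have hDn : (1 <= Dn)%N by move: hD1; rewrite eD; lia.
set a := (2 * n - 1)%N.
have ha : (1 <= a)%N by rewrite /a; lia.
have ea : a.+1 = (2 * n)%N by rewrite /a; lia.
have hex : exists k, (a ^ k * Dn < (2 * n) ^ k)%N.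
  exists (a * Dn)%N; have := bern (a * Dn) ha; rewrite ea.
  have hP : (0 < a ^ (a * Dn))%N by rewrite expn_gt0; lia.
  move: (a ^ (a * Dn))%N ((2 * n) ^ (a * Dn))%N hP => P Q hP h.
  have h' : (P * (1 + Dn) <= Q)%N by rewrite -(leq_pmul2l ha); nia.
  nia.
case: (ex_minnP hex) => K0 hK0 hmin.
have hj : exists j, (j <= K0)%N /\ optimal A b c u (x j).
  case: (inv K0) => // [[hf hb]].
  case: (classic (optimal A b c u (x K0))) => ho; first by exists K0.
  exfalso; have := nopt _ hf ho => hlt.
  have hP : 0 <= K ^+ K0 by apply: exprn_ge0; lia.
  have : K ^+ K0 <= (K - 1) ^+ K0 * D.
    apply: le_trans hb; rewrite -[X in X <= _]mulr1; apply: ler_wpM2l => //; lia.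
  have eK1 : K - 1 = a%:R by rewrite /K /a natrB ?natr1 //; lia.
  rewrite eK1 eD /K -!natrX -natz -natrM ler_nat; lia.
case: hj => j [hjK hoj]; exists j; split => //.
have eD' : cost c (x0 - xmin) = Dn%:Z by rewrite -eD /D cost_lin.
rewrite /within_bound eD'.
change (int_to_Z (Posz Dn)) with (BinInt.Z.of_nat Dn); rewrite -RIneq.INR_IZR_INZ.
have hK0pos : (0 < K0)%N.
  case: K0 hK0 {hmin hjK} => // ; rewrite expn0 mul1n; lia.
have hjK' := RIneq.le_INR _ _ (elimT ssrnat.leP hjK).
apply: (RIneq.Rle_trans _ _ _ hjK').
case: K0 hK0 hmin hjK hjK' hK0pos => [//|m] hK0 hmin hjK hjK' _.
case: m hK0 hmin hjK hjK' => [|m] hK0 hmin hjK hjK'.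
  exact: Rbasic_fun.Rmax_l.
apply: (RIneq.Rle_trans _ _ _ _ (Rbasic_fun.Rmax_r _ _)).
have hnP : ~~ (a ^ m.+1 * Dn < (2 * n) ^ m.+1)%N.
  by apply/negP => /hmin; lia.
have hD2 : (2 <= Dn)%N.
  case: Dn eD hDn hnP {eD' hex hK0 hmin} => [|[|Dn]] // eD hDn hnP.
  move: hnP; rewrite muln1 -leqNgt leqNgt ltn_exp2r //; rewrite /a; lia.
apply: RealPart.real_bound => //; rewrite leqNgt; exact: hnP.
Qed.
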